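(* Let $h=\sqrt{3}/2$ and consider the similarities of $\mathbb{R}^2$ $$S_1(\vec x)=\tfrac14\vec x,\quad S_2(\vec x)=\tfrac12\vec x+(1,0),\quad S_3(\vec x)=\tfrac14\vec x+(3,0),\quad S_4(\vec x)=\tfrac14\vec x+(1,2h),\quad S_5(\vec x)=\tfrac14\vec x+(\tfrac32,3h).$$ Let $K\subset\mathbb{R}^2$ be the unique nonempty compact set with $K=\bigcup_{j=1}^5 S_j(K)$. Then $K$ is a dendrite (a locally connected continuum containing no simple closed curve). *)

(* Defs.v *)
From HB Require Import structures.
From mathcomp Require Import all_boot all_order all_algebra.
From mathcomp Require Import all_classical all_reals all_analysis.
Set Implicit Arguments. Unset Strict Implicit. Unset Printing Implicit Defensive.
Import Order.TTheory GRing.Theory Num.Theory.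
Import numFieldNormedType.Exports.
Local Open Scope classical_set_scope.
Local Open Scope ring_scope.

Section Defs.
Variable R : realType.

Definition hh : R := Num.sqrt 3 / 2.

Definition S1 (p : R * R) : R * R := (p.1 / 4, p.2 / 4).
Definition S2 (p : R * R) : R * R := (p.1 / 2 + 1, p.2 / 2).
Definition S3 (p : R * R) : R * R := (p.1 / 4 + 3, p.2 / 4).
Definition S4 (p : R * R) : R * R := (p.1 / 4 + 1, p.2 / 4 + 2 * hh).
Definition S5 (p : R * R) : R * R := (p.1 / 4 + 3 / 2, p.2 / 4 + 3 * hh).

Definition ifs_invariant (K : set (R * R)) : Prop :=
  K = S1 @` K `|` S2 @` K `|` S3 @` K `|` S4 @` K `|` S5 @` K.

(* A continuum: nonempty compact connected set (the plane is metric). *)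
Definition continuum (K : set (R * R)) : Prop :=
  K !=set0 /\ compact K /\ connected K.

Definition locally_connected_set (K : set (R * R)) : Prop :=
  forall x U, K x -> open U -> U x ->
    exists W : set (R * R), [/\ open W, W x, W `&` K `<=` U & connected (W `&` K)].

Definition unit_circle : set (R * R) := [set p | p.1 ^+ 2 + p.2 ^+ 2 = 1].

(* A simple closed curve: a homeomorphic image of the circle, i.e. the image of
   the circle under a continuous injective map (homeomorphism onto the image
   since the circle is compact and the plane Hausdorff). *)
Definition simple_closed_curve (C : set (R * R)) : Prop :=
  exists g : R * R -> R * R,
    [/\ {within unit_circle, continuous g}, {in unit_circle &, injective g}
      & C = g @` unit_circle].

Definition dendrite (K : set (R * R)) : Prop :=
  [/\ continuum K, locally_connected_set K &
      forall C, C `<=` K -> ~ simple_closed_curve C].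

End Defs.

(* Main.v *)
Require Import Defs.
From HB Require Import structures.
From mathcomp Require Import all_boot all_order all_algebra.
From mathcomp Require Import all_classical all_reals all_analysis.
From mathcomp Require Import ring lra.
Import Order.TTheory GRing.Theory Num.Theory.
Import numFieldNormedType.Exports.
Local Open Scope classical_set_scope.
Local Open Scope ring_scope.
Set Implicit Arguments. Unset Strict Implicit. Unset Printing Implicit Defensive.
Section Gen.
Variable R : realType.
Implicit Types p q z : R * R.

Definition dm p q : R := Num.max `|p.1 - q.1| `|p.2 - q.2|.

Lemma ballE p e q : ball p e q <-> dm p q < e.
Proof.
rewrite /ball /= /prod_ball -!ball_normE /ball_ /= /dm gt_max.
by split => [[-> ->]|/andP].
Qed.

Lemma dm_ge1 p q : `|p.1 - q.1| <= dm p q.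
Proof. by rewrite /dm le_max lexx. Qed.
Lemma dm_ge2 p q : `|p.2 - q.2| <= dm p q.
Proof. by rewrite /dm le_max lexx orbT. Qed.
Lemma dm_le p q e : `|p.1 - q.1| <= e -> `|p.2 - q.2| <= e -> dm p q <= e.
Proof. by move=> h1 h2; rewrite /dm ge_max h1 h2. Qed.
Lemma dm_lt p q e : `|p.1 - q.1| < e -> `|p.2 - q.2| < e -> dm p q < e.
Proof. by move=> h1 h2; rewrite /dm gt_max h1 h2. Qed.
Lemma dm_ge0 p q : 0 <= dm p q.
Proof. exact: le_trans (normr_ge0 _) (dm_ge1 _ _). Qed.
Lemma dm_sym p q : dm p q = dm q p.
Proof. by rewrite /dm (distrC p.1) (distrC p.2). Qed.
Lemma dm_tri p q z : dm p z <= dm p q + dm q z.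
Proof.
apply: dm_le.
  apply: le_trans (ler_distD _ _ _) _; apply: lerD; exact: dm_ge1.
apply: le_trans (ler_distD _ _ _) _; apply: lerD; exact: dm_ge2.
Qed.
Lemma dm_eq0 p q : dm p q <= 0 -> p = q.
Proof.
move=> h; have h1 := le_trans (dm_ge1 p q) h; have h2 := le_trans (dm_ge2 p q) h.
move: h1 h2; rewrite !normr_le0 !subr_eq0 => /eqP h1 /eqP h2.
by case: p q h1 h2 {h} => [? ?] [? ?] /= -> ->.
Qed.

Lemma openP (U : set (R * R)) :
  open U <-> forall p, U p -> exists2 e : R, 0 < e & forall q, dm p q < e -> U q.
Proof.
rewrite openE; split => [h p Up|h p Up].
  have := h p Up; rewrite /interior => /nbhs_ballP [e e0 be].
  by exists e => // q /ballE/be.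
rewrite /interior; apply/nbhs_ballP; have [e e0 he] := h p Up.
by exists e => // q /ballE/he.
Qed.

Lemma lip_cont (f : R * R -> R * R) (c : R) : 0 < c ->
  (forall p q, dm (f p) (f q) <= c * dm p q) -> continuous f.
Proof.
move=> c0 hf x; apply/cvg_ballP => e e0.
suff : nbhs x [set y | ball (f x) e (f y)] by [].
apply/nbhs_ballP; exists (e / c); first by rewrite /= divr_gt0.
move=> y /ballE hy; apply/ballE; apply: le_lt_trans (hf x y) _.
by rewrite -ltr_pdivlMl // mulrC.
Qed.

Definition aff (r a b : R) p : R * R := (r * p.1 + a, r * p.2 + b).
Definition ainv (r a b : R) p : R * R := ((p.1 - a) / r, (p.2 - b) / r).

Lemma affK r a b : r != 0 -> cancel (aff r a b) (ainv r a b).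
Proof. by move=> r0 [x y]; rewrite /aff /ainv /=; congr pair; field. Qed.
Lemma ainvK r a b : r != 0 -> cancel (ainv r a b) (aff r a b).
Proof. by move=> r0 [x y]; rewrite /aff /ainv /=; congr pair; field. Qed.

Lemma dm_aff r a b p q : 0 <= r -> dm (aff r a b p) (aff r a b q) = r * dm p q.
Proof.
move=> r0; rewrite /dm /aff /=.
have -> : r * p.1 + a - (r * q.1 + a) = r * (p.1 - q.1) by ring.
have -> : r * p.2 + b - (r * q.2 + b) = r * (p.2 - q.2) by ring.
by rewrite !normrM (ger0_norm r0) maxr_pMr.
Qed.

Lemma dm_ainv r a b p q : 0 < r -> dm (ainv r a b p) (ainv r a b q) = r^-1 * dm p q.
Proof.
move=> r0; rewrite /dm /ainv /=.
have -> : (p.1 - a) / r - (q.1 - a) / r = r^-1 * (p.1 - q.1) by field; rewrite gt_eqF.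
have -> : (p.2 - b) / r - (q.2 - b) / r = r^-1 * (p.2 - q.2) by field; rewrite gt_eqF.
have ri : 0 <= r^-1 by rewrite invr_ge0 ltW.
by rewrite !normrM (ger0_norm ri) maxr_pMr.
Qed.

Lemma aff_cont r a b : 0 < r -> continuous (aff r a b).
Proof. by move=> r0; apply: (@lip_cont _ r) => // => p q; rewrite dm_aff // ltW. Qed.
Lemma ainv_cont r a b : 0 < r -> continuous (ainv r a b).
Proof.
move=> r0; apply: (@lip_cont _ r^-1); first by rewrite invr_gt0.
by move=> p q; rewrite dm_ainv.
Qed.

End Gen.
Section Gen2.
Variable R : realType.

Lemma doubling (T : Type) (P : T -> Prop) (mu : T -> R) (B : R) :
  (forall t, P t -> mu t <= B) ->
  (forall t, P t -> 0 < mu t -> exists t', P t' /\ 2 * mu t <= mu t') ->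
  forall t, P t -> mu t <= 0.
Proof.
move=> hB hS t Pt; rewrite leNgt; apply/negP => m0.
have H : forall n, exists t', P t' /\ 2 ^+ n * mu t <= mu t'.
  elim=> [|n [t' [Pt' h]]]; first by exists t; rewrite expr0 mul1r.
  have m' : 0 < mu t' by apply: lt_le_trans h; rewrite mulr_gt0 // exprn_gt0.
  have [t'' [P'' h'']] := hS t' Pt' m'.
  exists t''; split => //; apply: le_trans h''.
  by rewrite exprS -mulrA ler_pM2l.
pose n := (Num.trunc (B / mu t)).+1.
have [t' [Pt' h]] := H n.
have := truncnS_gt (B / mu t); rewrite -/n => hn.
have h2 : (n%:R : R) <= 2 ^+ n by rewrite -natrX ler_nat ltnW // ltn_expl.
have : B < mu t' .
  apply: lt_le_trans h; rewrite -ltr_pdivrMr //; exact: lt_le_trans hn h2.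
by rewrite ltNge hB.
Qed.

Lemma cut_lemma (A B X : set (R * R)) (a : R * R) : closed A -> closed B -> A a -> B a ->
  A `&` B `<=` [set a] -> X `<=` A `|` B -> connected (X `\ a) -> X `<=` A \/ X `<=` B.
Proof.
move=> cA cB Aa Ba AB XAB cX.
have sep : separated ((X `\ a) `&` A) ((X `\ a) `&` B).
  split; apply/seteqP; split => // x [].
    move=> /(closureS (@subIsetr _ _ A)); rewrite -(closure_id A).1 // => Ax [[_ xa] Bx].
    by apply: xa; apply: AB.
  move=> [[_ xa] Ax] /(closureS (@subIsetr _ _ B)); rewrite -(closure_id B).1 // => Bx.
  by apply: xa; apply: AB.
have sub : X `\ a `<=` ((X `\ a) `&` A) `|` ((X `\ a) `&` B).
  by move=> x [Xx xa]; case: (XAB x Xx) => h; [left|right].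
case: (connected_subset sep sub cX) => h; [left|right] => x Xx;
  (have [->|xa] := pselect (x = a)); [done| |done|];
  by have [] := h x (conj Xx xa).
Qed.

End Gen2.
Section Circle.
Variable R : realType.

Definition sden (t : R) : R := (t * t + 1)^-1.
Definition phi (q : R * R) (t : R) : R * R :=
  (q.1 * (1 - 2 * sden t) - q.2 * (2 * t * sden t),
   q.2 * (1 - 2 * sden t) + q.1 * (2 * t * sden t)).

Lemma sden_cont : continuous sden.
Proof.
move=> t; rewrite /sden; apply: cvgV.
  by apply/negP => /eqP h; nra.
by apply: cvgD; [apply: cvgM; exact: cvg_id | exact: cvg_cst].
Qed.

Lemma phi_cont q : continuous (phi q).
Proof.
move=> t; rewrite /phi; apply: (@cvg_pair _ _ _ _ (nbhs (_ : R^o)) (nbhs (_ : R^o))).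
  apply: cvgD; first apply: cvgM; try exact: cvg_cst.
    apply: cvgD; first exact: cvg_cst.
    by apply: cvgN; apply: cvgM; [exact: cvg_cst | exact: sden_cont].
  apply: cvgN; apply: cvgM; first exact: cvg_cst.
  by apply: cvgM; [apply: cvgM; [exact: cvg_cst|exact: cvg_id] | exact: sden_cont].
apply: cvgD; first apply: cvgM; try exact: cvg_cst.
  apply: cvgD; first exact: cvg_cst.
  by apply: cvgN; apply: cvgM; [exact: cvg_cst | exact: sden_cont].
apply: cvgM; first exact: cvg_cst.
by apply: cvgM; [apply: cvgM; [exact: cvg_cst|exact: cvg_id] | exact: sden_cont].
Qed.
End Circle.
Section Circle2.
Variable R : realType.
Local Notation circ := (@unit_circle R).

Lemma sden_pos (t : R) : 0 < sden t.
Proof. by rewrite /sden invr_gt0; nra. Qed.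
Lemma sdenK (t : R) : sden t * (t * t + 1) = 1.
Proof. by rewrite /sden mulVf //; apply/negP => /eqP h; nra. Qed.

Lemma phi_circ q t : circ q -> circ (phi q t) /\ phi q t <> q.
Proof.
rewrite /unit_circle /= => hq; have s0 := sden_pos t; have sK := sdenK t.
have e1 : (phi q t).1 ^+ 2 + (phi q t).2 ^+ 2 =
   (q.1 ^+ 2 + q.2 ^+ 2) * (1 - 4 * sden t + 4 * sden t * (sden t * (t * t + 1))).
  by rewrite /phi /=; ring.
split; first by rewrite e1 hq sK; ring.
move=> e; have e2 : q.1 * (phi q t).1 + q.2 * (phi q t).2 = (q.1 ^+ 2 + q.2 ^+ 2) * (1 - 2 * sden t).
  by rewrite /phi /=; ring.
by move: e2; rewrite e -!expr2 hq mul1r => e2; lra.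
Qed.

Lemma sden_aux (w1 w2 : R) : w1 ^+ 2 + w2 ^+ 2 = 1 -> 1 - w1 != 0 ->
  sden (w2 / (1 - w1)) = (1 - w1) / 2 /\ w2 / (1 - w1) * (1 - w1) = w2.
Proof.
move=> hw d0; split; last by field.
have h : w2 * w2 = (1 - w1) * (1 + w1) by rewrite -expr2; nra.
rewrite /sden.
have -> : w2 / (1 - w1) * (w2 / (1 - w1)) + 1 = (w2 * w2 + (1 - w1) * (1 - w1)) / ((1 - w1) * (1 - w1)).
  by field.
rewrite h.
have -> : ((1 - w1) * (1 + w1) + (1 - w1) * (1 - w1)) / ((1 - w1) * (1 - w1)) = 2 / (1 - w1).
  by field.
by rewrite invf_div.
Qed.

Lemma phi_surj q z : circ q -> circ z -> z <> q -> exists t, phi q t = z.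
Proof.
rewrite /unit_circle => hq hz zq.
pose w1 := q.1 * z.1 + q.2 * z.2; pose w2 := - q.2 * z.1 + q.1 * z.2.
have hw : w1 ^+ 2 + w2 ^+ 2 = 1.
  have -> : w1 ^+ 2 + w2 ^+ 2 = (q.1 ^+ 2 + q.2 ^+ 2) * (z.1 ^+ 2 + z.2 ^+ 2) by rewrite /w1 /w2; ring.
  by rewrite hq hz mulr1.
have rz1 : z.1 = q.1 * w1 - q.2 * w2.
  have -> : q.1 * w1 - q.2 * w2 = (q.1 ^+ 2 + q.2 ^+ 2) * z.1 by rewrite /w1 /w2; ring.
  by rewrite hq mul1r.
have rz2 : z.2 = q.2 * w1 + q.1 * w2.
  have -> : q.2 * w1 + q.1 * w2 = (q.1 ^+ 2 + q.2 ^+ 2) * z.2 by rewrite /w1 /w2; ring.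
  by rewrite hq mul1r.
have d0 : 1 - w1 != 0.
  apply/negP => /eqP d; have w11 : w1 = 1 by lra.
  have w20 : w2 = 0 by move: hw; rewrite w11 expr1n => h; apply/eqP; rewrite -sqrf_eq0; apply/eqP; lra.
  apply: zq; have e1' : z.1 = q.1 by rewrite rz1 w11 w20; ring.
  have e2' : z.2 = q.2 by rewrite rz2 w11 w20; ring.
  by rewrite [z]surjective_pairing [q]surjective_pairing e1' e2'.
have [hs ht] := sden_aux hw d0.
exists (w2 / (1 - w1)); rewrite [z]surjective_pairing /phi hs /=; congr pair.
  by rewrite rz1; clearbody w1 w2; field.
by rewrite rz2; clearbody w1 w2; field.
Qed.
End Circle2.
Section Circle3.
Variable R : realType.
Local Notation circ := (@unit_circle R).

Lemma circ_minus q : circ q -> circ `\ q = phi q @` setT.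
Proof.
move=> hq; apply/seteqP; split => [z [hz zq]|z [t _ <-]].
  by have [t ht] := phi_surj hq hz zq; exists t.
by have [] := phi_circ t hq.
Qed.

Lemma connT : connected (@setT R).
Proof. by apply/connected_intervalP => x y _ _ z _. Qed.

Lemma circ_minus_conn q : circ q -> connected (circ `\ q).
Proof.
move=> hq; rewrite circ_minus //; apply: connected_continuous_connected connT _.
exact/continuous_subspaceT/phi_cont.
Qed.

Lemma circ_conn : connected circ.
Proof.
have c1 : circ (1, 0) by rewrite /unit_circle /=; ring.
have c2 : circ (-1, 0) by rewrite /unit_circle /=; ring.
have -> : circ = (circ `\ (1, 0)) `|` (circ `\ (-1, 0)).
  apply/seteqP; split => [z hz|z [[]|[]] //].
  have [->|z1] := pselect (z = (1, 0)); last by left.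
  by right; split => // -[] /eqP; rewrite -subr_eq0 opprK (_ : 1 + 1 = 2 :> R) ?pnatr_eq0 //.
apply: connectedU; last 2 first.
- exact: circ_minus_conn.
- exact: circ_minus_conn.
exists (0, 1); split; split; rewrite /unit_circle /=; try ring.
  by move=> /(congr1 snd) /= /eqP; rewrite oner_eq0.
by move=> /(congr1 snd) /= /eqP; rewrite oner_eq0.
Qed.

Lemma scc_props (C : set (R * R)) : simple_closed_curve C ->
  (forall p, connected (C `\ p)) /\ exists u v, [/\ C u, C v & u <> v].
Proof.
move=> [g [gc ginj ->]]; split.
  move=> p; have [[q hq gqp]|np] := pselect ((g @` circ) p).
    have -> : g @` circ `\ p = g @` (circ `\ q).
      apply/seteqP; split => [z [[y hy <-] yp]|z [y [hy yq] <-]].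
        by exists y => //; split => // yq; apply: yp; rewrite yq.
      split; first by exists y.
      by rewrite -gqp => /ginj; rewrite !inE => /(_ hy hq).
    apply: connected_continuous_connected; first exact: circ_minus_conn.
    by apply: continuous_subspaceW gc => z [].
  have -> : g @` circ `\ p = g @` circ.
    by apply/seteqP; split => [z []//|z hz]; split => // zp; apply: np; rewrite -zp.
  exact: connected_continuous_connected circ_conn gc.
have c1 : circ (1, 0) by rewrite /unit_circle /=; ring.
have c2 : circ (-1, 0) by rewrite /unit_circle /=; ring.
exists (g (1, 0)), (g (-1, 0)); split; [by exists (1, 0) | by exists (-1, 0)|].
move/ginj; rewrite !inE => /(_ c1 c2) [] /eqP.
by rewrite -subr_eq0 opprK (_ : 1 + 1 = 2 :> R) ?pnatr_eq0.
Qed.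
End Circle3.
Section IFS.
Variable R : realType.
Variable K : set (R * R).
Hypothesis K0 : K !=set0.
Hypothesis Kc : compact K.
Hypothesis Ki : ifs_invariant K.

Local Notation h := (hh R).

Definition rr (j : nat) : R := if j == 1%N then 1 / 2 else 1 / 4.
Definition aa (j : nat) : R :=
  match j with 0 => 0 | 1 => 1 | 2 => 3 | 3 => 1 | _ => 3 / 2 end.
Definition bb (j : nat) : R :=
  match j with 0 | 1 | 2 => 0 | 3 => 2 * h | _ => 3 * h end.
Definition F (j : nat) := aff (rr j) (aa j) (bb j).
Definition G (j : nat) := ainv (rr j) (aa j) (bb j).
Definition Pc (j : nat) := F j @` K.

Lemma h_gt0 : 0 < h.
Proof. by rewrite /hh divr_gt0 // sqrtr_gt0. Qed.

Lemma rr_gt0 j : 0 < rr j.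
Proof. by rewrite /rr; case: ifP. Qed.
Lemma rr_le j : rr j <= 1 / 2.
Proof. by rewrite /rr; case: ifP => _ //; lra. Qed.
Lemma rr_neq0 j : rr j != 0.
Proof. by rewrite gt_eqF // rr_gt0. Qed.

Lemma FK j : cancel (F j) (G j).
Proof. exact: affK (rr_neq0 j). Qed.
Lemma GK j : cancel (G j) (F j).
Proof. exact: ainvK (rr_neq0 j). Qed.
Lemma dm_F j p q : dm (F j p) (F j q) = rr j * dm p q.
Proof. by rewrite /F dm_aff // ltW // rr_gt0. Qed.
Lemma dm_G j p q : dm (G j p) (G j q) = (rr j)^-1 * dm p q.
Proof. by rewrite /G dm_ainv // rr_gt0. Qed.
Lemma F_cont j : continuous (F j).
Proof. exact/aff_cont/rr_gt0. Qed.
Lemma G_cont j : continuous (G j).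
Proof. exact/ainv_cont/rr_gt0. Qed.

Lemma Kdec p : K p <-> exists2 j, (j < 5)%N & Pc j p.
Proof.
have e1 : @S1 R = F 0 by apply/funext => q; rewrite /S1 /F /aff /= /rr /aa /bb /=; congr pair; ring.
have e2 : @S2 R = F 1 by apply/funext => q; rewrite /S2 /F /aff /= /rr /aa /bb /=; congr pair; ring.
have e3 : @S3 R = F 2 by apply/funext => q; rewrite /S3 /F /aff /= /rr /aa /bb /=; congr pair; ring.
have e4 : @S4 R = F 3 by apply/funext => q; rewrite /S4 /F /aff /= /rr /aa /bb /=; congr pair; ring.
have e5 : @S5 R = F 4 by apply/funext => q; rewrite /S5 /F /aff /= /rr /aa /bb /=; congr pair; ring.
rewrite Ki e1 e2 e3 e4 e5; split.
  by move=> [[[[h0|h1]|h2]|h3]|h4]; [exists 0%N|exists 1%N|exists 2%N|exists 3%N|exists 4%N].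
by move=> [[|[|[|[|[|j]]]]] // _ hp]; [left;left;left;left|left;left;left;right|left;left;right|left;right|right].
Qed.

Lemma Pc_sub j : (j < 5)%N -> Pc j `<=` K.
Proof. by move=> j5 p hp; apply/Kdec; exists j. Qed.

Lemma Kbound : exists M : R, 0 < M /\ forall p, K p -> `|p.1| <= M /\ `|p.2| <= M.
Proof.
have [M [_ HM]] := compact_bounded Kc.
exists (Num.max M 0 + 1); split; first by rewrite ltr_pwDr // le_max lexx orbT.
move=> p Kp; have hx : M < Num.max M 0 + 1.
  by rewrite (@le_lt_trans _ _ (Num.max M 0)) ?le_max ?lexx // ltrDl.
by have := HM _ hx p Kp; rewrite /= prod_normE ge_max => /andP[-> ->].
Qed.

Lemma Kdm : exists M : R, 0 < M /\ forall p q, K p -> K q -> dm p q <= M.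
Proof.
have [M [M0 hM]] := Kbound; exists (M + M); split; first by rewrite addr_gt0.
move=> p q /hM [h1 h2] /hM [h3 h4]; apply: dm_le.
  by apply: le_trans (ler_normB _ _) _; apply: lerD.
by apply: le_trans (ler_normB _ _) _; apply: lerD.
Qed.

Lemma Kcl : closed K.
Proof. exact: compact_closed (@norm_hausdorff _ _) Kc. Qed.

Lemma Pc_compact j : compact (Pc j).
Proof. by apply: continuous_compact Kc; apply: continuous_subspaceT; exact: F_cont. Qed.
Lemma Pc_closed j : closed (Pc j).
Proof. by apply: compact_closed; [exact: norm_hausdorff | exact: Pc_compact]. Qed.
Lemma Pc_conn j : connected K -> connected (Pc j).
Proof. by move=> cK; apply: connected_continuous_connected cK _; apply: continuous_subspaceT; exact: F_cont. Qed.

Lemma fixK j : (j < 5)%N -> K (aa j / (1 - rr j), bb j / (1 - rr j)).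
Proof.
move=> j5; set z := (_, _).
have r0 := rr_gt0 j; have r1 := rr_le j.
have d0 : 1 - rr j != 0 by rewrite gt_eqF //; lra.
have Fz : F j z = z by rewrite /F /aff /z /=; congr pair; field.
apply: contrapT => nKz.
have [e e0 he] := (openP _).1 (closed_openC Kcl) z nKz.
have dge q : K q -> e <= dm z q.
  by move=> Kq; rewrite leNgt; apply/negP => /he.
have pos q : K q -> 0 < dm z q by move=> Kq; exact: lt_le_trans e0 (dge q Kq).
have h1 q : K q -> (dm z q)^-1 <= e^-1.
  by move=> Kq; rewrite lef_pV2 ?posrE ?pos // dge.
have h2 q : K q -> 0 < (dm z q)^-1 -> exists q', K q' /\ 2 * (dm z q)^-1 <= (dm z q')^-1.
  move=> Kq _; exists (F j q); split; first by apply: (Pc_sub j5); exists q.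
  rewrite -{2}Fz dm_F invfM; have := pos q Kq.
  set d := dm z q => dpos; rewrite ler_pM2r ?invr_gt0 //.
  by rewrite -(invrK 2) lef_pV2 ?posrE ?invr_gt0 //; lra.
have [q Kq] := K0; have := @doubling R _ K (fun q => (dm z q)^-1) e^-1 h1 h2 q Kq.
by rewrite leNgt invr_gt0 pos.
Qed.

Lemma neg_mul_le (x c M : R) : `|x| <= M -> - (c * x) <= `|c| * M.
Proof.
move=> hx; apply: le_trans (ler_norm _) _.
by rewrite normrN normrM ler_wpM2l.
Qed.

Lemma lin_ge0 (l1 l2 l0 : R) :
  (forall j q, (j < 5)%N -> rr j * (l1 * q.1 + l2 * q.2 + l0) <=
     l1 * (F j q).1 + l2 * (F j q).2 + l0) ->
  forall p, K p -> 0 <= l1 * p.1 + l2 * p.2 + l0.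
Proof.
move=> hL p Kp; have [M [M0 hM]] := Kbound.
pose L (q : R * R) := l1 * q.1 + l2 * q.2 + l0.
have hB q : K q -> - L q <= `|l1| * M + `|l2| * M + `|l0|.
  move=> /hM [h1 h2]; rewrite /L !opprD; apply: lerD; first apply: lerD.
  - exact: neg_mul_le.
  - exact: neg_mul_le.
  - by rewrite -normrN ler_norm.
have hS q : K q -> 0 < - L q -> exists q', K q' /\ 2 * - L q <= - L q'.
  move=> /Kdec [j j5 [q' Kq' <-]] Lq; exists q'; split => //.
  have := hL j q' j5; rewrite -/(L q') -/(L (F j q')).
  have := rr_gt0 j; have := rr_le j; move: Lq.
  set a := L (F j q'); set b := L q'; set r := rr j => *; nra.
have := @doubling R _ K (fun q => - L q) _ hB hS p Kp.
by rewrite /L oppr_le0.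
Qed.

Definition inT (p : R * R) := [/\ 0 <= p.2, p.2 <= 2 * h * p.1 & p.2 <= 2 * h * (4 - p.1)].

Lemma K_T p : K p -> inT p.
Proof.
have hh0 := h_gt0.
move=> Kp; split.
- have : 0 <= 0 * p.1 + 1 * p.2 + 0.
    apply: (lin_ge0 _ Kp) => j q; case: j => [|[|[|[|[|j]]]]] //= _; rewrite /F /aff /rr /aa /bb /=; nra.
  move=> H; nra.
- have : 0 <= 2 * h * p.1 + (-1) * p.2 + 0.
    apply: (lin_ge0 _ Kp) => j q; case: j => [|[|[|[|[|j]]]]] //= _; rewrite /F /aff /rr /aa /bb /=; nra.
  move=> H; nra.
- have : 0 <= - (2 * h) * p.1 + (-1) * p.2 + 8 * h.
    apply: (lin_ge0 _ Kp) => j q; case: j => [|[|[|[|[|j]]]]] //= _; rewrite /F /aff /rr /aa /bb /=; nra.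
  move=> H; nra.
Qed.

Definition Z0 : R * R := (0, 0).
Definition Z2 : R * R := (4, 0).
Definition Z4 : R * R := (2, 4 * h).
Lemma KZ0 : K Z0.
Proof.
have := @fixK 0 isT; congr K; rewrite /Z0 /aa /bb /rr /=; congr pair; field => //.
Qed.
Lemma KZ2 : K Z2.
Proof.
have := @fixK 2 isT; congr K; rewrite /Z2 /aa /bb /rr /=; congr pair; field => //.
Qed.
Lemma KZ4 : K Z4.
Proof.
have := @fixK 4 isT; congr K; rewrite /Z4 /aa /bb /rr /=; congr pair; field => //.
Qed.

Definition J01 : R * R := (1, 0).
Definition J12 : R * R := (3, 0).
Definition J13 : R * R := (2, 2 * h).
Definition J34 : R * R := (3 / 2, 3 * h).

Ltac memb Z HZ := exists Z; [exact: HZ | rewrite /F /aff /rr /aa /bb /= ; congr pair; field => //].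
Lemma J01_0 : Pc 0 J01. Proof. memb Z2 KZ2. Qed.
Lemma J01_1 : Pc 1 J01. Proof. memb Z0 KZ0. Qed.
Lemma J12_1 : Pc 1 J12. Proof. memb Z2 KZ2. Qed.
Lemma J12_2 : Pc 2 J12. Proof. memb Z0 KZ0. Qed.
Lemma J13_1 : Pc 1 J13. Proof. memb Z4 KZ4. Qed.
Lemma J13_3 : Pc 3 J13. Proof. memb Z2 KZ2. Qed.
Lemma J34_3 : Pc 3 J34. Proof. memb Z4 KZ4. Qed.
Lemma J34_4 : Pc 4 J34. Proof. memb Z0 KZ0. Qed.

Ltac inter := have hh0 := h_gt0;
  move=> p [[q Kq <-] [q' Kq']]; have [? ? ?] := K_T Kq; have [? ? ?] := K_T Kq';
  rewrite /F /aff /rr /aa /bb /= => -[? ?].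
Lemma I01 : Pc 0 `&` Pc 1 `<=` [set J01].
Proof. inter; rewrite /J01 /=; congr pair; nra. Qed.
Lemma I02 : Pc 0 `&` Pc 2 `<=` set0. Proof. inter; nra. Qed.
Lemma I03 : Pc 0 `&` Pc 3 `<=` set0. Proof. inter; nra. Qed.
Lemma I04 : Pc 0 `&` Pc 4 `<=` set0. Proof. inter; nra. Qed.
Lemma I21 : Pc 2 `&` Pc 1 `<=` [set J12].
Proof. inter; rewrite /J12 /=; congr pair; nra. Qed.
Lemma I23 : Pc 2 `&` Pc 3 `<=` set0. Proof. inter; nra. Qed.
Lemma I24 : Pc 2 `&` Pc 4 `<=` set0. Proof. inter; nra. Qed.
Lemma I13 : Pc 1 `&` Pc 3 `<=` [set J13].
Proof. inter; rewrite /J13 /=; congr pair; nra. Qed.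
Lemma I14 : Pc 1 `&` Pc 4 `<=` set0. Proof. inter; nra. Qed.
Lemma I34 : Pc 3 `&` Pc 4 `<=` [set J34].
Proof. inter; rewrite /J34 /=; congr pair; nra. Qed.

Lemma dm_refl (p : R * R) : dm p p = 0.
Proof. by rewrite /dm !subrr normr0 maxxx. Qed.

Lemma pos_dist (A B : set (R * R)) : compact A -> closed B ->
  (forall x, A x -> ~ B x) ->
  exists2 d : R, 0 < d & forall a b, A a -> B b -> d <= dm a b.
Proof.
move=> cA cB AB; apply: contrapT => nd.
have nd' d : 0 < d -> exists a b, [/\ A a, B b & dm a b < d].
  move=> d0; apply: contrapT => hn; apply: nd; exists d => // a b Aa Bb.
  rewrite leNgt; apply/negP => hab; apply: hn; by exists a, b; split.
pose S (d : R) := [set a | A a /\ exists b, B b /\ dm a b < d].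
pose Fl := filter_from [set d : R | 0 < d] S.
have FF : ProperFilter Fl.
  apply: filter_from_proper; last first.
    by move=> d d0; have [a [b [Aa Bb hab]]] := nd' d d0; exists a; split => //; exists b.
  apply: filter_from_filter; first by exists 1; rewrite /= ltr01.
  move=> d1 d2 d10 d20; exists (Num.min d1 d2); first by rewrite /= lt_min d10.
  move=> a [Aa [b [Bb hab]]]; move: hab; rewrite lt_min => /andP [h1 h2].
  by split; split => //; exists b.
have FA : Fl A by exists 1 => //= a [].
have [x [Ax clx]] := cA Fl FF FA.
have [e e0 he] := (openP _).1 (closed_openC cB) x (AB x Ax).
have nb : nbhs x [set y | dm x y < e / 2].
  apply/nbhs_ballP; exists (e / 2); first by rewrite /= divr_gt0.
  by move=> y /ballE.
have Fs : Fl (S (e / 2)) by exists (e / 2) => //=; rewrite divr_gt0.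
have [y [[Ay [b [Bb hyb]]] hxy]] := clx _ _ Fs nb.
apply: (he b) => //; apply: le_lt_trans (dm_tri x y b) _.
move: hxy hyb; rewrite /= => *; lra.
Qed.

Definition sepP (t : (set (R * R) * set (R * R)) * R) : Prop :=
  [/\ 0 < t.2, t.1.1 !=set0, t.1.2 !=set0, K = t.1.1 `|` t.1.2 &
     forall a b, t.1.1 a -> t.1.2 b -> t.2 <= dm a b].

Lemma sep_step t : sepP t -> exists t', sepP t' /\ 2 * t.2 <= t'.2.
Proof.
case: t => [[A B] d] [/= d0 [a Aa] [b Bb] KAB dAB].
have disj x : A x -> B x -> False.
  by move=> Ax Bx; have := dAB _ _ Ax Bx; rewrite dm_refl leNgt d0.
have inK x : A x \/ B x -> K x by rewrite KAB.
have [[j [j5 [[x [Pjx Ax]] [y [Pjy By]]]]]|nb] :=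
    pselect (exists j, (j < 5)%N /\ (exists x, Pc j x /\ A x) /\ exists y, Pc j y /\ B y).
  move: Pjx Pjy => [qx Kqx Fqx] [qy Kqy Fqy].
  exists ([set q | K q /\ A (F j q)], [set q | K q /\ B (F j q)], d / rr j); split => /=.
  - split; first by rewrite divr_gt0 // rr_gt0.
    + by exists qx; split => //; rewrite Fqx.
    + by exists qy; split => //; rewrite Fqy.
    + apply/seteqP; split => [q Kq|q [[]|[]]//].
      have : (A `|` B) (F j q) by rewrite -KAB; apply: (Pc_sub j5); exists q.
      by move=> -[?|?]; [left|right].
    + move=> a' b' [_ Aa'] [_ Bb']; have := dAB _ _ Aa' Bb'; rewrite dm_F.
      by rewrite ler_pdivrMr ?rr_gt0 // [_ * rr j]mulrC.
  - have := rr_gt0 j; have := rr_le j => r1 r0.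
    rewrite ler_pdivlMr //; nra.
exfalso.
have side j : (j < 5)%N -> Pc j `<=` A \/ Pc j `<=` B.
  move=> j5; have [hA|hA] := pselect (exists x, Pc j x /\ A x).
    left => z Pz; have : K z by apply: (Pc_sub j5).
    rewrite KAB => -[//|Bz]; exfalso; apply: nb; exists j; split => //; split => //.
    by exists z.
  right => z Pz; have : K z by apply: (Pc_sub j5).
  by rewrite KAB => -[Az|//]; exfalso; apply: hA; exists z.
have prop i j (J : R * R) : (i < 5)%N -> (j < 5)%N -> Pc i J -> Pc j J ->
    (Pc i `<=` A -> Pc j `<=` A) /\ (Pc i `<=` B -> Pc j `<=` B).
  move=> i5 j5 PiJ PjJ; split => hi.
    by case: (side j j5) => // hj; exfalso; apply: (disj J); [apply: hi|apply: hj].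
  by case: (side j j5) => // hj; exfalso; apply: (disj J); [apply: hj|apply: hi].
have all_side (C : set (R * R)) : Pc 0 `<=` C ->
    (forall i j (J : R * R), (i < 5)%N -> (j < 5)%N -> Pc i J -> Pc j J -> Pc i `<=` C -> Pc j `<=` C) ->
    K `<=` C.
  move=> h0 hp z /Kdec [j j5 Pz].
  have h1 : Pc 1 `<=` C := hp 0%N 1%N _ isT isT J01_0 J01_1 h0.
  have h2 : Pc 2 `<=` C := hp 1%N 2%N _ isT isT J12_1 J12_2 h1.
  have h3 : Pc 3 `<=` C := hp 1%N 3%N _ isT isT J13_1 J13_3 h1.
  have h4 : Pc 4 `<=` C := hp 3%N 4%N _ isT isT J34_3 J34_4 h3.
  by move: j j5 Pz => [|[|[|[|[|j]]]]] //= _; [apply: h0|apply: h1|apply: h2|apply: h3|apply: h4].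
case: (side 0%N isT) => h0.
  have := all_side A h0 (fun i j J i5 j5 PiJ PjJ => (prop i j J i5 j5 PiJ PjJ).1).
  by move=> KA; apply: (disj b) => //; apply: KA; apply: inK; right.
have := all_side B h0 (fun i j J i5 j5 PiJ PjJ => (prop i j J i5 j5 PiJ PjJ).2).
by move=> KB; apply: (disj a) => //; apply: KB; apply: inK; left.
Qed.

Lemma K_conn : connected K.
Proof.
apply: contrapT => /connectedPn [E [E0 KE sep]].
have [s1 s2] := sep.
have EK b : E b `<=` K by rewrite KE; case: b => x Ex; [right|left].
have clK : closure K = K by rewrite -(closure_id K).1 //; exact: Kcl.
have cl b : closed (E b).
  apply/closure_id/seteqP; split; first exact: subset_closure.
  move=> x cx; have Kx : K x by rewrite -clK; exact: (closureS (EK b)).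
  move: Kx; rewrite {1}KE; case: b cx => cx [Ef|Et] //.
    by exfalso; move: s2; rewrite -subset0 => /(_ x); apply; split.
  by exfalso; move: s1; rewrite -subset0 => /(_ x); apply; split.
have cF : compact (E false).
  by rewrite -(setIidr (EK false)); apply: compact_closedI Kc (cl false).
have dj : forall x, E false x -> ~ E true x.
  by move=> x Ef Et; have := separated_disjoint sep; rewrite -subset0 => /(_ x); apply.
have [d d0 hd] := pos_dist cF (cl true) dj.
have [M [M0 hM]] := Kdm.
have PB t : sepP t -> t.2 <= M.
  case: t => [[A B] d'] [/= _ [a Aa] [b Bb] KAB dAB].
  apply: le_trans (dAB _ _ Aa Bb) (hM _ _ _ _); rewrite KAB; [left|right] => //.
have Ps : sepP ((E false, E true), d) by split => //=.
have := @doubling R _ sepP (fun t => t.2) M PB (fun t Pt _ => sep_step Pt) _ Ps.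
by rewrite /= leNgt d0.
Qed.

Lemma open_preG j (U : set (R * R)) : open U -> open [set z | U (G j z)].
Proof.
move=> /openP oU; apply/openP => z Uz; have [e e0 he] := oU _ Uz.
have r0 := rr_gt0 j.
exists (e * rr j); first by rewrite mulr_gt0.
move=> z' hz; apply: he; rewrite dm_G.
by rewrite -ltr_pdivlMl ?invr_gt0 // invrK mulrC.
Qed.

Definition cikN (M : R) (n : nat) (y : R * R) (N : set (R * R)) :=
  [/\ N `<=` K, N y, connected N & forall z, N z -> dm y z <= M / 2 ^+ n].

Lemma cik_step (M : R) n : 0 < M ->
  (forall y, K y -> exists N O, cikN M n y N /\ [/\ open O, O y & forall z, K z -> O z -> N z]) ->
  forall y, K y -> exists N O, cikN M n.+1 y N /\ [/\ open O, O y & forall z, K z -> O z -> N z].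
Proof.
move=> M0 IH y Ky.
have inner : forall m, (m <= 5)%N -> exists N O, cikN M n.+1 y N /\
    [/\ open O, O y & forall z, K z -> O z -> (exists2 j, (j < m)%N & Pc j z) -> N z].
  elim=> [_|m IHm m5].
    exists [set y], setT; split; last by split; [exact: openT|done|move=> z _ _ []].
    split => //; [by move=> z ->| exact: connected1|].
    move=> z ->; rewrite dm_refl; apply: divr_ge0; [exact: ltW|exact: exprn_ge0].
  have m5' : (m < 5)%N by [].
  have [N0 [Oa [[N0K N0y cN0 bN0] [oOa Oay cov0]]]] := IHm (ltnW m5).
  have [[q Kq Fq]|nP] := pselect (Pc m y).
    have [N' [Ob [[N'K N'q cN' bN'] [oOb Obq cov']]]] := IH q Kq.
    exists (N0 `|` F m @` N'), (Oa `&` [set z | Ob (G m z)]); split; split.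
    - move=> z [/N0K //|[w /N'K Kw <-]]; apply: (Pc_sub m5'); by exists w.
    - by left.
    - apply: connectedU.
      + by exists y; split => //; exists q.
      + exact: cN0.
      + by apply: connected_continuous_connected cN' _; apply: continuous_subspaceT; exact: F_cont.
    - move=> z [/bN0 //|[w /bN' hw <-]]; rewrite -Fq dm_F.
      have r0 := rr_gt0 m; have r1 := rr_le m.
      apply: le_trans (ler_wpM2l (ltW r0) hw) _.
      have u0 : 0 <= M / 2 ^+ n by apply: divr_ge0; [exact: ltW|exact: exprn_ge0].
      have e : M / 2 ^+ n.+1 = (M / 2 ^+ n) / 2.
        by rewrite exprS; field; rewrite expf_neq0.
      rewrite e; move: u0; set u := M / 2 ^+ n => u0; nra.
    - by apply: openI => //; exact: open_preG.
    - by split => //=; rewrite -Fq FK.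
    - move=> z Kz [Oaz Obz] [j jm Pz]; move: jm; rewrite ltnS leq_eqVlt => /orP [/eqP ej|jm].
        move: Pz; rewrite ej => -[w Kw Fw]; right; exists w => //.
        by apply: cov' => //; move: Obz; rewrite /= -Fw FK.
      by left; apply: cov0 => //; exists j.
  exists N0, (Oa `&` ~` Pc m); split => //; split.
  - by apply: openI => //; apply: closed_openC; exact: Pc_closed.
  - by split.
  - move=> z Kz [Oaz nz] [j jm Pz]; move: jm; rewrite ltnS leq_eqVlt => /orP [/eqP ej|jm].
      by exfalso; apply: nz; rewrite -ej.
    by apply: cov0 => //; exists j.
have [N [Ov [hN [oO Oy cov]]]] := inner 5%N isT.
exists N, Ov; split => //; split => // z Kz Oz; apply: cov => //; exact/Kdec.
Qed.

Lemma cik_all : exists M : R, 0 < M /\ forall n y, K y -> exists N Ov,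
  cikN M n y N /\ [/\ open Ov, Ov y & forall z, K z -> Ov z -> N z].
Proof.
have [M [M0 hM]] := Kdm; exists M; split => //; elim=> [|n IH].
  move=> y Ky; exists K, setT; split; last by split; [exact: openT|done|done].
  split => //; first exact: K_conn.
  by move=> z Kz; rewrite expr0 divr1; exact: hM.
exact: cik_step.
Qed.

Lemma cik_eps y e : K y -> 0 < e -> exists N Ov,
  [/\ N `<=` K, N y, connected N & forall z, N z -> dm y z < e] /\
  [/\ open Ov, Ov y & forall z, K z -> Ov z -> N z].
Proof.
move=> Ky e0; have [M [M0 hc]] := cik_all.
pose n := (Num.trunc (M / e)).+1.
have hn := truncnS_gt (M / e); rewrite -/n in hn.
have h2 : (n%:R : R) <= 2 ^+ n by rewrite -natrX ler_nat ltnW // ltn_expl.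
have lt : M / 2 ^+ n < e.
  rewrite ltr_pdivrMr ?exprn_gt0 // mulrC -ltr_pdivrMr //.
  exact: lt_le_trans hn h2.
have [N [Ov [[NK Ny cN bN] hO]]] := hc n y Ky.
exists N, Ov; split => //; split => // z Nz; exact: le_lt_trans (bN z Nz) lt.
Qed.

Lemma K_lc : locally_connected_set K.
Proof.
move=> x U Kx oU Ux.
have [e e0 he] := (openP U).1 oU x Ux.
pose V := [set q | dm x q < e].
pose C := connected_component (K `&` V) x.
pose W := [set z | exists Ov, [/\ open Ov, Ov z & Ov `&` K `<=` C]].
have CKV : C `<=` K `&` V by exact: connected_component_sub.
have CW z : C z -> W z.
  move=> Cz; have [Kz Vz] := CKV z Cz.
  have eta0 : 0 < e - dm x z by rewrite subr_gt0.
  have [N [Ov [[NK Nz cN bN] [oO Oz cov]]]] := cik_eps Kz eta0.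
  exists Ov; split => // w [Ow Kw].
  have NKV : N `<=` K `&` V.
    move=> u Nu; split; first exact: NK.
    rewrite /V /=; apply: le_lt_trans (dm_tri x z u) _.
    by rewrite -ltrBrDl; exact: bN.
  rewrite /C (same_connected_component Cz).
  exact: (connected_component_max Nz NKV cN) (cov w Kw Ow).
have Cx : C x.
  by apply: connected_component_refl; split => //; rewrite /V /= dm_refl.
have WKC : W `&` K = C.
  apply/seteqP; split => [z [[Ov [oO Oz sub]] Kz]|z Cz]; first exact: sub.
  by split; [exact: CW | exact: (CKV z Cz).1].
exists W; split.
- apply/openP => z [Ov [oO Oz sub]].
  have [r r0 hr] := (openP Ov).1 oO z Oz.
  exists r => // w hw; exists Ov; split => //; exact: hr.
- exact: CW.
- by rewrite WKC => z /CKV [_]; exact: he.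
- rewrite WKC; exact: component_connected.
Qed.

Lemma cut5 (X : set (R * R)) : X `<=` K -> (forall p, connected (X `\ p)) ->
  exists2 j, (j < 5)%N & X `<=` Pc j.
Proof.
move=> XK cX.
have cl := Pc_closed.
have XU : X `<=` Pc 0 `|` (Pc 1 `|` (Pc 2 `|` (Pc 3 `|` Pc 4))).
  move=> x /XK /Kdec [[|[|[|[|[|j]]]]] // _ hx];
    by [left|right;left|right;right;left|right;right;right;left|right;right;right;right].
have ca := @cut_lemma R (Pc 0) (Pc 1 `|` (Pc 2 `|` (Pc 3 `|` Pc 4))) X J01.
case: ca => //.
- by apply: closedU => //; apply: closedU => //; apply: closedU.
- exact: J01_0.
- by left; exact: J01_1.
- move=> z [P0 [P1|[P2|[P3|P4]]]]; first exact: I01.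
  + by have := I02 (conj P0 P2).
  + by have := I03 (conj P0 P3).
  + by have := I04 (conj P0 P4).
- by move=> h; exists 0%N.
move=> {}XU.
have XU2 : X `<=` Pc 2 `|` (Pc 1 `|` (Pc 3 `|` Pc 4)).
  by move=> x /XU [?|[?|[?|?]]]; [right;left|left|right;right;left|right;right;right].
have cb := @cut_lemma R (Pc 2) (Pc 1 `|` (Pc 3 `|` Pc 4)) X J12.
case: cb => //.
- by apply: closedU => //; apply: closedU.
- exact: J12_2.
- by left; exact: J12_1.
- move=> z [P2 [P1|[P3|P4]]]; first exact: I21.
  + by have := I23 (conj P2 P3).
  + by have := I24 (conj P2 P4).
- by move=> h; exists 2%N.
move=> {XU2}XU.
have cc := @cut_lemma R (Pc 1) (Pc 3 `|` Pc 4) X J13.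
case: cc => //.
- by apply: closedU.
- exact: J13_1.
- by left; exact: J13_3.
- move=> z [P1 [P3|P4]]; first exact: I13.
  by have := I14 (conj P1 P4).
- by move=> h; exists 1%N.
move=> {}XU.
have cd := @cut_lemma R (Pc 3) (Pc 4) X J34.
case: cd => //.
- exact: J34_3.
- exact: J34_4.
- exact: I34.
- by move=> h; exists 3%N.
- by move=> h; exists 4%N.
Qed.

Lemma no_scc C : C `<=` K -> ~ simple_closed_curve C.
Proof.
move=> CK scc; have [cC [u [v [Cu Cv uv]]]] := scc_props scc.
pose P (t : (set (R * R) * (R * R)) * (R * R)) :=
  [/\ t.1.1 `<=` K, (forall p, connected (t.1.1 `\ p)), t.1.1 t.1.2 & t.1.1 t.2].
have [M [M0 hM]] := Kdm.
have PB t : P t -> dm t.1.2 t.2 <= M.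
  by case: t => [[X a] b] [/= XK _ Xa Xb]; apply: hM; apply: XK.
have PS t : P t -> 0 < dm t.1.2 t.2 -> exists t', P t' /\ 2 * dm t.1.2 t.2 <= dm t'.1.2 t'.2.
  case: t => [[X a] b] [/= XK cX Xa Xb] _.
  have [j j5 XP] := cut5 XK cX.
  exists ((G j @` X, G j a), G j b); split; last first.
    rewrite /= dm_G; have := rr_gt0 j; have := rr_le j; have := dm_ge0 a b.
    move=> d0 r1 r0; apply: ler_wpM2r => //.
    by rewrite -(invrK 2) lef_pV2 ?posrE ?invr_gt0 //; lra.
  split => /=.
  - move=> z [x Xx <-]; have [q Kq <-] := XP x Xx; by rewrite FK.
  - move=> p; have -> : G j @` X `\ p = G j @` (X `\ F j p).
      apply/seteqP; split => [z [[x Xx <-] xp]|z [x [Xx xp] <-]].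
        by exists x => //; split => // e; apply: xp; rewrite e FK.
      by split; [exists x|] => // e; apply: xp; rewrite -e GK.
    apply: connected_continuous_connected (cX _) _; apply: continuous_subspaceT.
    exact: G_cont.
  - by exists a.
  - by exists b.
have Pt : P ((C, u), v) by split.
have := @doubling R _ P (fun t => dm t.1.2 t.2) M PB PS _ Pt.
by move=> /= /dm_eq0.
Qed.

Lemma K_dendrite : dendrite K.
Proof.
split; [split; [exact: K0|split; [exact: Kc|exact: K_conn]] | exact: K_lc |].
exact: no_scc.
Qed.
End IFS.

Unset Implicit Arguments.

Theorem mainTheorem2 (R : realType) (K : set (R * R)) :
  K !=set0 -> compact K -> ifs_invariant K -> dendrite K.
Proof. by move=> K0 Kc Ki; exact: (@K_dendrite R K K0 Kc Ki). Qed.
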